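(* Let $G$ be a finite group acting transitively on a finite set $X$, fix $x_0\in X$, let $H=G_{x_0}$, and let $K\subset G$ be a regular subgroup. Let $\rho\colon K\to U(\mathcal{H})$ be a unitary representation and $v\in\mathcal{H}$ such that $\{\rho(k)v\}_{k\in K}$ spans $\mathcal{H}$. Then there exists a unitary representation $\tilde\rho\colon G\to U(\mathcal{H})$ with $\tilde\rho|_K=\rho$ and $\tilde\rho(h)v=v$ for all $h\in H$ if and only if the function $\varphi(k)=\langle v,\rho(k)v\rangle$ ($k\in K$) belongs to $L^2(K)^H$.
   Context: $H$ acts on $K$ by $h\cdot k=k'$ iff $hk\cdot x_0=k'\cdot x_0$, and $L^2(K)^H$ is the space of functions $\varphi\colon K\to\mathbb{C}$ with $\varphi(h\cdot k)=\varphi(k)$ for all $h\in H$, $k\in K$. A subgroup $K\subset G$ is regular if it acts transitively on $X$ with trivial point stabilizers. Inner products are linear in the first argument. *)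

(* Defs.v *)
From HB Require Import structures.
From mathcomp Require Import all_boot all_order all_algebra all_fingroup all_solvable all_field all_character.
From mathcomp Require Import spectral.
Set Implicit Arguments. Unset Strict Implicit. Unset Printing Implicit Defensive.
Import Order.TTheory GRing.Theory Num.Theory.
Local Open Scope ring_scope.

Section Defs.
Variables (gT : finGroupType) (X : finType).

Definition is_left_action (G : {set gT}) (act : gT -> X -> X) : Prop :=
  (forall x, act 1%g x = x) /\
  (forall g h x, g \in G -> h \in G -> act (g * h)%g x = act g (act h x)).

Definition act_transitive (G : {set gT}) (act : gT -> X -> X) : Prop :=
  forall x y : X, exists2 g, g \in G & act g x = y.

Definition stabilizer (G : {set gT}) (act : gT -> X -> X) (x0 : X) : {set gT} :=
  [set g in G | act g x0 == x0].

Definition regular_subgroup (K : {set gT}) (act : gT -> X -> X) : Prop :=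
  act_transitive K act /\
  (forall (x : X) (k : gT), k \in K -> act k x = x -> k = 1%g).

(* phi in L^2(K)^H : phi (h . k) = phi k where h . k = k' iff hk.x0 = k'.x0 *)
Definition in_L2_inv (H K : {set gT}) (act : gT -> X -> X) (x0 : X)
  (phi : gT -> algC) : Prop :=
  forall h k k', h \in H -> k \in K -> k' \in K ->
    act (h * k)%g x0 = act k' x0 -> phi k' = phi k.
End Defs.

(* Hilbert space C^n as column vectors; inner product linear in the first argument *)
Definition inner (n : nat) (u w : 'cV[algC]_n) : algC :=
  \sum_(i < n) u i 0 * (w i 0)^*.

Definition orbit_spans (gT : finGroupType) (K : {group gT}) (n : nat)
  (rho : mx_representation algC K n) (v : 'cV[algC]_n) : Prop :=
  (\sum_(k in K) <<(rho k *m v)^T>> == 1%:M)%MS.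

(* Main.v *)
Require Import Defs.
From HB Require Import structures.
From mathcomp Require Import all_boot all_order all_algebra all_fingroup all_solvable all_field all_character.
From mathcomp Require Import spectral.
Import Order.TTheory GRing.Theory Num.Theory.
Local Open Scope ring_scope.

Section Aux.
Local Open Scope sesquilinear_scope.

Lemma tC_eq0 m p (A : 'M[algC]_(m, p)) : A ^t* *m A = 0 -> A = 0.
Proof.
move=> H; apply/matrixP => i j; rewrite mxE.
have := congr1 (fun B : 'M[algC]_p => B j j) H; rewrite !mxE => /psumr_eq0P H2.
have /eqP : (A i j)^* * A i j = 0.
  have := H2 _ i isT; rewrite !mxE => -> //.
  by move=> l _; rewrite !mxE mulrC mul_conjC_ge0.
by rewrite mulrC mul_conjC_eq0 => /eqP.
Qed.

Variables (gT : finGroupType) (X : finType) (G K : {group gT})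
  (act : gT -> X -> X) (x0 : X) (n : nat)
  (rho : mx_representation algC K n) (v : 'cV[algC]_n).
Hypotheses (Hact : is_left_action G act) (HKG : K \subset G)
  (Hreg : regular_subgroup K act)
  (Hun : forall k, k \in K -> rho k \is unitarymx).

Lemma actM g h x : g \in G -> h \in G -> act (g * h)%g x = act g (act h x).
Proof. by move=> gG hG; case: Hact => _ ->. Qed.

Lemma act1 x : act 1%g x = x.
Proof. by case: Hact. Qed.

Lemma actVK g x : g \in G -> act g^-1%g (act g x) = x.
Proof. by move=> gG; rewrite -actM ?groupV // mulVg act1. Qed.

Lemma inKG k : k \in K -> k \in G.
Proof. by move=> kK; apply: (subsetP HKG). Qed.

Definition kap (x : X) : gT := odflt 1%g [pick k in K | act k x0 == x].

Lemma kapP x : kap x \in K /\ act (kap x) x0 = x.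
Proof.
rewrite /kap; case: pickP => [k /andP [kK /eqP e] | H] //=.
case: Hreg => Htr _; have [k kK e] := Htr x0 x.
by have := H k; rewrite kK e eqxx.
Qed.

Lemma kapK x : kap x \in K.
Proof. by case: (kapP x). Qed.

Lemma kap_act x : act (kap x) x0 = x.
Proof. by case: (kapP x). Qed.

Lemma kap_uniq k : k \in K -> kap (act k x0) = k.
Proof.
move=> kK; set k' := kap _.
have k'K : k' \in K := kapK _.
have e : act (k'^-1 * k)%g x0 = x0.
  by rewrite actM ?groupV ?inKG // -{1}(kap_act (act k x0)) actVK ?inKG.
have := proj2 Hreg x0 _ (groupM (groupVr k'K) kK) e.
by move=> H; rewrite -(mulKVg k' k) H mulg1.
Qed.

Lemma kap1 : kap x0 = 1%g.
Proof. by rewrite -{1}(act1 x0) kap_uniq. Qed.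

Lemma rhoV k : k \in K -> (rho k)^t* = rho k^-1%g.
Proof. by move=> kK; rewrite repr_mxV // invmx_unitary ?Hun. Qed.


Lemma actKV g x : g \in G -> act g (act g^-1%g x) = x.
Proof. by move=> gG; rewrite -actM ?groupV // mulgV act1. Qed.

Lemma actVkap y : act (kap y)^-1%g y = x0.
Proof. by have := @actVK (kap y) x0 (inKG _ (kapK y)); rewrite kap_act. Qed.

Definition phi (k : gT) := inner v (rho k *m v).

Lemma innerE m (u w : 'cV[algC]_m) : inner u w = (w^t* *m u) 0 0.
Proof. by rewrite /inner mxE; apply: eq_bigr => i _; rewrite !mxE mulrC. Qed.

Lemma fwd (rt : mx_representation algC G n) :
  (forall g, g \in G -> rt g \is unitarymx) ->
  (forall k, k \in K -> rt k = rho k) ->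
  (forall h, h \in stabilizer G act x0 -> rt h *m v = v) ->
  in_L2_inv (stabilizer G act x0) K act x0 phi.
Proof.
move=> Hu Hext Hfix h k k' hH kK k'K e.
have hG : h \in G by move: hH; rewrite inE => /andP[].
have kG := inKG _ kK; have k'G := inKG _ k'K.
set h' := (k'^-1 * (h * k))%g.
have h'H : h' \in stabilizer G act x0.
  rewrite inE; apply/andP; split; first by rewrite !groupM ?groupV.
  apply/eqP.
  have e' : act h (act k x0) = act k' x0 by rewrite -actM.
  by rewrite !actM ?groupM ?groupV // e' actVK.
have h'G : h' \in G by move: h'H; rewrite inE => /andP[].
have ek : k = (h^-1 * k' * h')%g by rewrite /h' mulgA mulgK mulKg.
clearbody h'.
have hVG : (h^-1)%g \in G by rewrite groupV.
have hk'G : (h^-1 * k')%g \in G by rewrite groupM.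
rewrite /phi !innerE -!Hext // [in RHS]ek !repr_mxM //.
rewrite -mulmxA (Hfix _ h'H) repr_mxV // invmx_unitary ?Hu // -mulmxA.
by rewrite [in RHS]trmx_mul map_mxM trmxCK -mulmxA (Hfix _ hH).
Qed.


Lemma tCE p q (A : 'M[algC]_(p, q)) i j : (A^t*) i j = (A j i)^*.
Proof. by rewrite !mxE. Qed.

Definition w (x : X) : 'cV[algC]_n := rho (kap x) *m v.
Definition M : 'M[algC]_(n, #|X|) := \matrix_(i, j) w (enum_val j) i 0.
Definition Q (g : gT) : 'M[algC]_#|X| :=
  \matrix_(a, b) (a == enum_rank (act g (enum_val b)))%:R.

Lemma mulQ p (A : 'M[algC]_(p, #|X|)) g i j :
  (A *m Q g) i j = A i (enum_rank (act g (enum_val j))).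
Proof.
rewrite mxE (bigD1 (enum_rank (act g (enum_val j)))) //= mxE eqxx mulr1.
by rewrite big1 ?addr0 // => a /negbTE ne; rewrite mxE ne mulr0.
Qed.

Lemma QM g1 g2 : g1 \in G -> g2 \in G -> Q (g1 * g2)%g = Q g1 *m Q g2.
Proof.
move=> g1G g2G; apply/matrixP => a b; rewrite mulQ !mxE enum_rankK.
by rewrite actM.
Qed.

Lemma Q1 : Q 1%g = 1%:M.
Proof. by apply/matrixP => a b; rewrite !mxE act1 enum_valK eq_sym. Qed.

Lemma GfE x y : \sum_i (w x i 0)^* * w y i 0 = (phi ((kap x)^-1 * kap y)%g)^*.
Proof.
have -> : \sum_i (w x i 0)^* * w y i 0 = ((w x)^t* *m w y) 0 0.
  by rewrite mxE; apply: eq_bigr => i _; rewrite !mxE.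
rewrite /phi innerE /w trmx_mul map_mxM rhoV ?kapK // -mulmxA.
rewrite [rho _ *m (rho _ *m v)]mulmxA -repr_mxM ?groupV ?kapK //.
rewrite !mxE rmorph_sum; apply: eq_bigr => i _.
rewrite !mxE rmorphM mulrC; congr (_ * _); symmetry; exact: conjCK. Qed.


Lemma phi_inv (Hphi : in_L2_inv (stabilizer G act x0) K act x0 phi) g x y :
  g \in G -> phi ((kap (act g x))^-1 * kap (act g y))%g = phi ((kap x)^-1 * kap y)%g.
Proof.
move=> gG.
have kxK := kapK x; have kyK := kapK y.
have kgxK := kapK (act g x); have kgyK := kapK (act g y).
have kxG := inKG _ kxK; have kyG := inKG _ kyK.
have kgxG := inKG _ kgxK; have kgyG := inKG _ kgyK.
have hG : ((kap (act g x))^-1 * g * kap x)%g \in G by rewrite !groupM ?groupV.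
have kG : ((kap x)^-1 * kap y)%g \in G by rewrite !groupM ?groupV.
apply: (Hphi ((kap (act g x))^-1 * g * kap x)%g).
- rewrite inE hG /=; apply/eqP.
  by rewrite !actM ?groupM ?groupV // kap_act actVkap.
- by rewrite groupM ?groupV.
- by rewrite groupM ?groupV.
rewrite actM // !actM ?groupM ?groupV // !kap_act actKV //.
Qed.

Lemma gram (Hphi : in_L2_inv (stabilizer G act x0) K act x0 phi) g :
  g \in G -> (M *m Q g)^t* *m (M *m Q g) = M^t* *m M.
Proof.
move=> gG; apply/matrixP => a b; rewrite mxE [RHS]mxE.
have E : forall c d, \sum_i ((M^t*) c i) * M i d
   = (phi ((kap (enum_val c))^-1 * kap (enum_val d))%g)^*.
  by move=> c d; rewrite -GfE; apply: eq_bigr => i _; rewrite !mxE.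
rewrite E -(phi_inv Hphi _ _ _ gG) -(enum_rankK (act g (enum_val a))).
rewrite -(enum_rankK (act g (enum_val b))) -E.
by apply: eq_bigr => i _; rewrite !tCE !mulQ.
Qed.


Lemma existsR : orbit_spans rho v -> exists R : 'M[algC]_(#|X|, n), M *m R = 1%:M.
Proof.
move=> Hsp.
have : row_full M^T.
  rewrite -sub1mx; case/andP: Hsp => _ H1; apply: submx_trans H1 _.
  apply/sumsmx_subP => k kK; rewrite genmxE.
  have -> : (rho k *m v)^T = row (enum_rank (act k x0)) M^T.
    by apply/rowP => j; rewrite !mxE enum_rankK /w kap_uniq.
  exact: row_sub.
case/row_fullP => B HB; exists B^T.
by rewrite -[M]trmxK -trmx_mul HB trmx1.
Qed.


Section Back.
Variable R : 'M[algC]_(#|X|, n).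
Hypothesis HMR : M *m R = 1%:M.
Hypothesis Hphi : in_L2_inv (stabilizer G act x0) K act x0 phi.

Lemma kerM g : g \in G -> M *m Q g *m R *m M = M *m Q g.
Proof.
move=> gG; set N := M *m Q g; set Y := 1%:M - R *m M.
have HY : M *m Y = 0 by rewrite mulmxBr mulmx1 mulmxA HMR mul1mx subrr.
have HNY : N *m Y = 0.
  apply: tC_eq0.
  rewrite trmx_mul map_mxM -mulmxA [N^t* *m (N *m Y)]mulmxA gram //.
  by rewrite -[M^t* *m M *m Y]mulmxA HY !mulmx0.
by move/eqP: HNY; rewrite mulmxBr mulmx1 subr_eq0 mulmxA => /eqP <-.
Qed.

Definition rt g := M *m Q g *m R.

Lemma rtM g : g \in G -> rt g *m M = M *m Q g.
Proof. exact: kerM. Qed.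

Lemma rt_repr : mx_repr G rt.
Proof.
split; first by rewrite /rt Q1 mulmx1 HMR.
move=> g1 g2 g1G g2G /=.
by rewrite {1}/rt QM // mulmxA -rtM // /rt !mulmxA.
Qed.

Definition rtR := MxRepresentation rt_repr.

Lemma rt_unitary g : g \in G -> rt g \is unitarymx.
Proof.
move=> gG; apply/eqP; apply: mulmx1C.
have RM : R^t* *m M^t* = 1%:M by rewrite -map_mxM -trmx_mul HMR trmx1 map_mx1.
have E : (rt g *m M)^t* *m (rt g *m M) = M^t* *m M by rewrite rtM // gram.
transitivity (R^t* *m ((rt g *m M)^t* *m (rt g *m M)) *m R).
  by rewrite [in RHS]trmx_mul [in RHS]map_mxM !mulmxA RM mul1mx -[_ *m M *m R]mulmxA HMR mulmx1.
by rewrite E !mulmxA RM mul1mx HMR.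
Qed.

Lemma rt_ext k : k \in K -> rt k = rho k.
Proof.
move=> kK; have kG := inKG _ kK.
have E : M *m Q k = rho k *m M.
  apply/matrixP => i j; rewrite mulQ !mxE enum_rankK.
  have kjK := kapK (enum_val j); have kjG := inKG _ kjK.
  have ek : kap (act k (enum_val j)) = (k * kap (enum_val j))%g.
    have := @kap_uniq _ (groupM kK kjK); rewrite actM // kap_act => ->; done.
  rewrite /w ek repr_mxM //.
  have -> : forall A : 'M_n, \sum_j0 A i j0 * v j0 0 = (A *m v) i 0.
    by move=> A; rewrite mxE.
  by rewrite -mulmxA mxE; apply: eq_bigr => l _; rewrite !mxE.
by rewrite /rt E -mulmxA HMR mulmx1.
Qed.



Definition e0 : 'cV[algC]_#|X| := \col_j (j == enum_rank x0)%:R.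

Lemma mulE p (A : 'M[algC]_(p, #|X|)) i : (A *m e0) i 0 = A i (enum_rank x0).
Proof.
rewrite mxE (bigD1 (enum_rank x0)) //= mxE eqxx mulr1.
by rewrite big1 ?addr0 // => a /negbTE ne; rewrite mxE ne mulr0.
Qed.

Lemma Mev : M *m e0 = v.
Proof.
apply/matrixP => i j; rewrite (ord1 j) mulE mxE enum_rankK /w kap1 repr_mx1.
by rewrite mul1mx.
Qed.

Lemma rt_fix h : h \in stabilizer G act x0 -> rt h *m v = v.
Proof.
rewrite inE => /andP [hG /eqP hx].
rewrite -{1}Mev mulmxA rtM //; apply/matrixP => i j.
by rewrite (ord1 j) mulE mulQ enum_rankK hx -mulE Mev.
Qed.

End Back.

Lemma main_sec : orbit_spans rho v ->
  (exists rt : mx_representation algC G n,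
      [/\ forall g, g \in G -> rt g \is unitarymx,
          forall k, k \in K -> rt k = rho k
        & forall h, h \in stabilizer G act x0 -> rt h *m v = v])
  <-> in_L2_inv (stabilizer G act x0) K act x0 phi.
Proof.
move=> Hsp; split.
  by case=> rt [Hu Hext Hfix]; exact (@fwd rt Hu Hext Hfix).
move=> Hphi; have [R HMR] := existsR Hsp.
exists (@rtR R HMR Hphi); split => /=.
- by move=> g gG; apply: rt_unitary.
- by move=> k kK; apply: rt_ext.
- by move=> h hH; apply: rt_fix.
Qed.

End Aux.

Theorem corollary3p13 (gT : finGroupType) (X : finType) (G K : {group gT})
  (act : gT -> X -> X) (x0 : X) (n : nat)
  (rho : mx_representation algC K n) (v : 'cV[algC]_n) :
  is_left_action G act ->
  act_transitive G act ->
  K \subset G ->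
  regular_subgroup K act ->
  (forall k, k \in K -> rho k \is unitarymx) ->
  orbit_spans rho v ->
  (exists rt : mx_representation algC G n,
      [/\ forall g, g \in G -> rt g \is unitarymx,
          forall k, k \in K -> rt k = rho k
        & forall h, h \in stabilizer G act x0 -> rt h *m v = v])
  <-> in_L2_inv (stabilizer G act x0) K act x0 (fun k => inner v (rho k *m v)).
Proof.
move=> Hact _ HKG Hreg Hun Hsp.
exact: (@main_sec gT X G K act x0 n rho v Hact HKG Hreg Hun Hsp).
Qed.
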